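(* Let $L$ be a reduced Latin square of order $n$ with rows $\sigma_1,\dots,\sigma_n$ and columns $\pi_1,\dots,\pi_n$ (as permutations). For each $k\in[n]$ let $I_k$ be the set of permutations $\alpha\in S_n$ such that for every $i\in[n]$ the permutations $\sigma_{\alpha(i)}$ and $\sigma_k^{-1}\sigma_i$ have the same cycle structure (this set is empty unless the multiset of cycle structures of $\{\sigma_k^{-1}\sigma_i\}_{i=1}^n$ coincides with the multiset of cycle structures of $\{\sigma_i\}_{i=1}^n$). For $\alpha\in S_n$ and $j\in[n]$ let $\Theta_{\alpha,j}=(\alpha,\ \alpha\pi_j\sigma_{\alpha^{-1}(1)}^{-1},\ \alpha\pi_j)$. Then $$\mathfrak A(L)=\{\Theta_{\alpha,j}:\ \alpha\in\textstyle\bigcup_{k=1}^n I_k,\ j\in[n],\ \Theta_{\alpha,j}(L)=L\}.$$ In other words, the algorithm that computes the cycle structures of the rows, forms the sets $I_k$, and for each $\alpha\in\bigcup_k I_k$ and each $j$ tests whether $\Theta_{\alpha,j}(L)=L$, outputs exactly the autotopy group $\mathfrak A(L)$.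
   Context: A Latin square of order $n$ is an $n\times n$ array with entries in $[n]$, each symbol once in each row and column. Permutations compose right to left. An isotopism $(\alpha,\beta,\gamma)\in S_n^3$ acts by $(\alpha,\beta,\gamma)(L)=L'$ with $L'(\alpha(r),\beta(c))=\gamma(L(r,c))$; $\mathfrak A(L)=\{\Theta\in S_n^3:\Theta(L)=L\}$ is the autotopy group. Rows and columns are viewed as permutations: if symbol $i$ appears in the $j$th place of a row (column) $\sigma$, then $\sigma(i)=j$; so row $r$ is $\sigma_r$ with $\sigma_r(L(r,c))=c$ and column $c$ is $\pi_c$ with $\pi_c(L(r,c))=r$. $L$ is reduced if its first row and first column are the identity permutation. The cycle structure of a permutation is the multiset of lengths of cycles in its disjoint cycle decomposition. *)

(* Defs.v *)
From mathcomp Require Import all_boot all_fingroup.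
Set Implicit Arguments. Unset Strict Implicit. Unset Printing Implicit Defensive.
Local Open Scope group_scope.

(* Symbols/rows/columns [n] are represented by 'I_m (0-based: paper's i is i-1). *)
Definition lsquare (m : nat) := 'I_m -> 'I_m -> 'I_m.

Definition is_latin m (L : lsquare m) : Prop :=
  (forall r, injective (L r)) /\ (forall c, injective (fun r => L r c)).

(* Paper composition (right to left): (pcomp a b) x = a (b x).
   MathComp's group product is left-to-right: (b * a) x = a (b x). *)
Definition pcomp (T : finType) (a b : {perm T}) : {perm T} := (b * a)%g.

(* Isotopism Θ = (α,β,γ) acting on L: L'(α r, β c) = γ (L r c). *)
Definition isotope m (a b g : {perm 'I_m}) (L : lsquare m) : lsquare m :=
  fun r' c' => g (L (a^-1 r') (b^-1 c')).

Definition fixes m (T : {perm 'I_m} * {perm 'I_m} * {perm 'I_m}) (L : lsquare m) : Prop :=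
  forall r c, isotope T.1.1 T.1.2 T.2 L r c = L r c.

Definition autotopy m (L : lsquare m) (T : {perm 'I_m} * {perm 'I_m} * {perm 'I_m}) : Prop :=
  fixes T L.

Definition is_rows m (L : lsquare m) (sigma : 'I_m -> {perm 'I_m}) : Prop :=
  forall r c, sigma r (L r c) = c.
Definition is_cols m (L : lsquare m) (pi : 'I_m -> {perm 'I_m}) : Prop :=
  forall r c, pi c (L r c) = r.

Definition is_reduced n (L : lsquare n.+1) : Prop :=
  (forall c, L ord0 c = c) /\ (forall r, L r ord0 = r).

(* Cycle structure: the multiset of cycle lengths, as a sorted list. *)
Definition cycle_structure (T : finType) (s : {perm T}) : seq nat :=
  sort leq (map (fun C : {set T} => #|C|)%N (enum (porbits s))).

Definition Iset m (sigma : 'I_m -> {perm 'I_m}) (k : 'I_m) (a : {perm 'I_m}) : Prop :=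
  forall i, cycle_structure (sigma (a i)) = cycle_structure (pcomp (sigma k)^-1 (sigma i)).

Definition Theta n (sigma pi : 'I_n.+1 -> {perm 'I_n.+1}) (a : {perm 'I_n.+1}) (j : 'I_n.+1)
  : {perm 'I_n.+1} * {perm 'I_n.+1} * {perm 'I_n.+1} :=
  (a, pcomp (pcomp a (pi j)) (sigma (a^-1 ord0))^-1, pcomp a (pi j)).

(* Main.v *)
Require Import Defs.
From mathcomp Require Import all_boot all_fingroup.
Set Implicit Arguments. Unset Strict Implicit. Unset Printing Implicit Defensive.
Local Open Scope group_scope.

Lemma porbitJ (T : finType) (s g : {perm T}) x :
  porbit (s ^ g) (g x) = g @: porbit s x.
Proof.
apply/setP => y; apply/porbitP/imsetP.
- move=> [i ->]; exists ((s ^+ i) x); first exact: mem_porbit.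
  by rewrite -conjXg conjgE !permM permK.
- move=> [z /porbitP [i ->] ->]; exists i.
  by rewrite -conjXg conjgE !permM permK.
Qed.

Lemma porbitsJ (T : finType) (s g : {perm T}) :
  porbits (s ^ g) = (fun C : {set T} => g @: C) @: porbits s.
Proof.
apply/setP => C; apply/imsetP/imsetP.
- move=> [x _ ->]; exists (porbit s (g^-1 x)); first exact: imset_f.
  by rewrite -porbitJ permKV.
- move=> [D /imsetP [x _ ->] ->]; exists (g x) => //.
  by rewrite porbitJ.
Qed.

Lemma sort_card_imset (T : finType) (s g : {perm T}) (P : {set {set T}}) (F : {set T} -> {set T})
  (Finj : injective F) (Fc : forall C, #|F C| = #|C|) :
  sort leq (map (fun C : {set T} => #|C|) (enum (F @: P))) = sort leq (map (fun C : {set T} => #|C|) (enum P)).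
Proof.
apply/perm_sortP.
- by move=> a b; apply: leq_total.
- by move=> a b c; apply: leq_trans.
- by move=> a b /andP[]; move=> h1 h2; apply/eqP; rewrite eqn_leq h1 h2.
have E : perm_eq (enum (F @: P)) (map F (enum P)).
  apply: uniq_perm.
  - exact: enum_uniq.
  - by rewrite (map_inj_uniq Finj) enum_uniq.
  move=> C; rewrite mem_enum; apply/imsetP/mapP.
  - by move=> [D HD ->]; exists D => //; rewrite mem_enum.
  - by move=> [D HD ->]; exists D => //; rewrite -mem_enum.
apply: perm_trans (perm_map _ E) _.
rewrite -map_comp; rewrite (eq_map (g := fun C : {set T} => #|C|)) //.
Qed.

Lemma cycle_structureJ (T : finType) (s g : {perm T}) :
  cycle_structure (s ^ g) = cycle_structure s.
Proof.
rewrite /cycle_structure porbitsJ; apply: (@sort_card_imset T s g).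
- move=> A B /setP E; apply/setP => x.
  by have := E (g x); rewrite !(mem_imset _ _ (@perm_inj _ g)).
- by move=> C; rewrite card_imset //; apply: perm_inj.
Qed.

Theorem theorem5p2 (n : nat) (L : lsquare n.+1)
  (sigma pi : 'I_n.+1 -> {perm 'I_n.+1}) :
  is_latin L -> is_reduced L -> is_rows L sigma -> is_cols L pi ->
  forall T : {perm 'I_n.+1} * {perm 'I_n.+1} * {perm 'I_n.+1},
    autotopy L T <->
    exists (a : {perm 'I_n.+1}) (j : 'I_n.+1),
      (exists k, Iset sigma k a) /\ T = Theta sigma pi a j /\ fixes (Theta sigma pi a j) L.
Proof.
move=> [Lr Lc] [L0c Lr0] Hrows Hcols T; split; last first.
  by move=> [a [j [_ [-> H]]]].
case: T => [[a b] g] H.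
have H' : forall r c, g (L r c) = L (a r) (b c).
  move=> r c; have := H (a r) (b c); rewrite /isotope /= !permK => ->; done.
have Lrow : forall r s, L r (sigma r s) = s.
  by move=> r s; apply: (@perm_inj _ (sigma r)); rewrite Hrows.
have Lcol : forall c s, L (pi c s) c = s.
  by move=> c s; apply: (@perm_inj _ (pi c)); rewrite Hcols.
set j := b^-1 ord0; set r0 := a^-1 ord0.
have Eg : g = Defs.pcomp a (pi j).
  apply/permP => s; rewrite /Defs.pcomp permM.
  by rewrite -{1}(Lcol j s) H' /j permKV Lr0.
have EL0 : forall c, L r0 c = (sigma r0)^-1 c.
  by move=> c; apply: (@perm_inj _ (sigma r0)); rewrite Hrows permKV.
have Eb : b = Defs.pcomp (Defs.pcomp a (pi j)) (sigma (a^-1 ord0))^-1.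
  apply/permP => c; rewrite /Defs.pcomp permM -/r0 -EL0 -[(pi j * a)]/(Defs.pcomp a (pi j)) -Eg.
  by rewrite H' /r0 permKV L0c.
have ET : (a, b, g) = Theta sigma pi a j by rewrite /Theta Eb -Eg.
exists a, j; split; last by split => //; rewrite -ET.
exists r0 => i.
suff -> : sigma (a i) = (Defs.pcomp (sigma r0)^-1 (sigma i)) ^ g.
  by rewrite cycle_structureJ.
apply/permP => y; rewrite -(permKV g y); set s := g^-1 y.
rewrite -(Lrow i s) H' Hrows conjgE !permM.
by rewrite -H' permK Hrows -EL0 H' /r0 permKV L0c.
Qed.
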